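(* Let $C,A^1,\dots,A^m\in\mathbb{S}^n$, $b\in\mathbb{R}^m$, with $\mathbf{P}$ and $\mathbf{D}$ feasible and $\mathbf{D}$ of singularity degree one, and let $0\le r<n$ be such that, writing $L(y)=C-\sum_iA^iy_i$ in blocks $L_{11}(y)\in\mathbb{S}^r$, $L_{12}(y)\in\mathbb{R}^{r\times(n-r)}$, $L_{22}(y)\in\mathbb{S}^{n-r}$: (a) for every $y$, $L(y)\succeq0$ iff $L_{12}(y)=0$, $L_{22}(y)=0$, $L_{11}(y)\succeq0$; (b) some $y$ has $L_{12}(y)=0$, $L_{22}(y)=0$, $L_{11}(y)\succ0$; (c) there is $X=\mathrm{diag}(0,X_{22})$ with $X_{22}\succ0$, $C\bullet X=0$, $A^i\bullet X=0$ for all $i$. Let $M>0$ be a constant such that for all $t\ge0$ and $y\in\mathbb{R}^m$, $L_{22}(y)+tI_{22}\succeq0$ implies $tMI_{22}\succeq L_{22}(y)+tI_{22}$. For $\alpha>0,t>0$ let $u_1(\alpha,t)$ be the optimal value (supremum) of $$\mathbf{RD1}(\alpha,t):\ \max_y\ b^Ty-\frac{\|L_{12}(y)\|_F^2}{M\alpha}\ \text{ s.t. } L(y)+t\alpha I\succeq0 .$$ Then for all $t>0$ and $\alpha>0$, $$v(0,t)\le v(t\alpha,t)\le u_1(\alpha,t)+t^2\alpha n+tc,\qquad c:=C\bullet I .$$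
   Context: $\mathbf{P}$: $\min_X C\bullet X$ s.t. $A^i\bullet X=b_i$, $X\succeq0$; $\mathbf{D}$: $\max_y b^Ty$ s.t. $C-\sum_iA^iy_i\succeq0$. $\mathbf{D}$ has singularity degree one if it is feasible and there exists a nonzero $X\succeq0$ with $C\bullet X=0$, $A^i\bullet X=0$ for all $i$, such that some $y$ has $C-\sum_iA^iy_i$ in the relative interior of $\{Z\succeq0: Z\bullet X=0\}$. For $\varepsilon,\eta\ge0$: $\mathbf{D}(\varepsilon,\eta)$: $\max_y \sum_i(b_i+\eta A^i\bullet I)y_i$ s.t. $C-\sum_iA^iy_i+\varepsilon I\succeq0$, and $\mathbf{P}(\varepsilon,\eta)$: $\min_X (C+\varepsilon I)\bullet X$ s.t. $A^i\bullet X=b_i+\eta A^i\bullet I$, $X\succeq0$; for $(\varepsilon,\eta)\ne(0,0)$, $v(\varepsilon,\eta)$ is their common optimal value. $\|\cdot\|_F$ is the Frobenius norm; $I_{22}$ is the $(n-r)\times(n-r)$ identity. *)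

(* Defs.v *)
From HB Require Import structures.
From mathcomp Require Import all_boot all_order all_algebra.
From mathcomp Require Import boolp classical_sets reals constructive_ereal ereal.

Set Implicit Arguments.
Unset Strict Implicit.
Unset Printing Implicit Defensive.

Import Order.TTheory GRing.Theory Num.Theory.
Local Open Scope classical_set_scope.
Local Open Scope ring_scope.

Section SDP.
Variable R : realType.

Definition mdot (p q : nat) (A B : 'M[R]_(p, q)) : R :=
  \sum_(i < p) \sum_(j < q) A i j * B i j.

Definition psd (n : nat) (A : 'M[R]_n) : Prop :=
  A^T = A /\ forall x : 'cV[R]_n, 0 <= (x^T *m A *m x) 0 0.

Definition pd (n : nat) (A : 'M[R]_n) : Prop :=
  A^T = A /\ forall x : 'cV[R]_n, x != 0 -> 0 < (x^T *m A *m x) 0 0.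

Definition Lmap (n m : nat) (C : 'M[R]_n) (A : 'I_m -> 'M[R]_n) (y : 'I_m -> R)
  : 'M[R]_n := C - \sum_(i < m) y i *: A i.

Definition bdot (m : nat) (b y : 'I_m -> R) : R := \sum_(i < m) b i * y i.

Definition P_feasible (n m : nat) (A : 'I_m -> 'M[R]_n) (b : 'I_m -> R) : Prop :=
  exists X : 'M[R]_n, psd X /\ forall i, mdot (A i) X = b i.

Definition D_feasible (n m : nat) (C : 'M[R]_n) (A : 'I_m -> 'M[R]_n) : Prop :=
  exists y : 'I_m -> R, psd (Lmap C A y).

Definition affine_hull (n : nat) (S : set 'M[R]_n) : set 'M[R]_n :=
  [set Z | exists (s : seq 'M[R]_n) (l : seq R),
     size l = size s /\ (forall j, (j < size s)%N -> S s`_j) /\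
     \sum_(j < size s) l`_j = 1 /\ Z = \sum_(j < size s) l`_j *: s`_j].

Definition rel_interior (n : nat) (S : set 'M[R]_n) : set 'M[R]_n :=
  [set Z | S Z /\ exists e : R, 0 < e /\
     forall W, affine_hull S W -> mdot (W - Z) (W - Z) < e ^+ 2 -> S W].

Definition sing_deg_one (n m : nat) (C : 'M[R]_n) (A : 'I_m -> 'M[R]_n) : Prop :=
  D_feasible C A /\
  exists X : 'M[R]_n, [/\ psd X, X != 0, mdot C X = 0,
    (forall i, mdot (A i) X = 0) &
    exists y, rel_interior [set Z | psd Z /\ mdot Z X = 0] (Lmap C A y)].

Definition vD (n m : nat) (C : 'M[R]_n) (A : 'I_m -> 'M[R]_n) (b : 'I_m -> R)
  (eps eta : R) : \bar R :=
  ereal_sup ((fun y => (\sum_(i < m) (b i + eta * mdot (A i) 1%:M) * y i)%:E) @`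
     [set y | psd (Lmap C A y + eps%:M)]).

Definition u1 (r k m : nat) (C : 'M[R]_(r + k)) (A : 'I_m -> 'M[R]_(r + k))
  (b : 'I_m -> R) (M alpha t : R) : \bar R :=
  ereal_sup ((fun y => (bdot b y -
       mdot (ursubmx (Lmap C A y)) (ursubmx (Lmap C A y)) / (M * alpha))%:E) @`
     [set y | psd (Lmap C A y + (t * alpha)%:M)]).

End SDP.

(* Main.v *)
Require Import Defs.
From HB Require Import structures.
From mathcomp Require Import all_boot all_order all_algebra.
From mathcomp Require Import boolp classical_sets reals constructive_ereal ereal.
From mathcomp Require Import ring lra.
Import Order.TTheory GRing.Theory Num.Theory.
Local Open Scope classical_set_scope.
Local Open Scope ring_scope.

Module H.
Unset Strict Implicit.
Set Implicit Arguments.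
Section S.
Variable R : realType.
Definition qf n (Z : 'M[R]_n) (x : 'cV[R]_n) := (x^T *m Z *m x) 0 0.

Lemma qf_expand n (Z : 'M[R]_n) (u w : 'cV_n) (mu : R) : Z^T = Z ->
  qf Z (mu *: u - w) = mu^+2 * qf Z u - 2 * mu * (u^T *m Z *m w) 0 0 + qf Z w.
Proof.
move=> hZ; rewrite /qf.
have e : w^T *m Z *m u = (u^T *m Z *m w)^T by rewrite !trmx_mul trmxK hZ mulmxA.
rewrite !linearB /= !mulmxBl !linearZ /= -!scalemxAl -?scalemxAr e. set a := u^T *m Z *m u. set c := u^T *m Z *m w. set d := w^T *m Z *m w. rewrite !mxE. ring.
Qed.

Lemma qf_u r k (Z11 : 'M[R]_r) (Z12 : 'M_(r,k)) Z21 (Z22 : 'M_k) (i : 'I_r) :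
  qf (block_mx Z11 Z12 Z21 Z22) (col_mx (delta_mx i 0) 0) = Z11 i i.
Proof.
rewrite /qf tr_col_mx trmx0 trmx_delta mul_row_block !mul0mx !addr0 mul_row_col mulmx0 addr0.
by rewrite -rowE -colE !mxE.
Qed.

Lemma qf_w r k (Z11 : 'M[R]_r) (Z12 : 'M_(r,k)) Z21 (Z22 : 'M_k) (z : 'cV_k) :
  qf (block_mx Z11 Z12 Z21 Z22) (col_mx 0 z) = qf Z22 z.
Proof.
by rewrite /qf tr_col_mx trmx0 mul_row_block !mul0mx !add0r mul_row_col mulmx0 add0r.
Qed.

Lemma bl_uw r k (Z11 : 'M[R]_r) (Z12 : 'M_(r,k)) Z21 (Z22 : 'M_k) (i : 'I_r) (z : 'cV_k) :
  ((col_mx (delta_mx i 0 : 'cV_r) 0)^T *m block_mx Z11 Z12 Z21 Z22 *m col_mx 0 z) 0 0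
  = (row i Z12 *m z) 0 0.
Proof.
by rewrite tr_col_mx trmx0 trmx_delta mul_row_block !mul0mx !addr0 mul_row_col mulmx0 add0r -rowE.
Qed.

Lemma key r k (Z11 : 'M[R]_r) (Z12 : 'M_(r,k)) Z21 (Z22 : 'M_k) (mu : R) :
  0 < mu -> psd (block_mx Z11 Z12 Z21 Z22) -> psd (mu%:M - Z22) ->
  mdot Z12 Z12 <= mu * \tr Z11.
Proof.
move=> hmu [hs hp] [_ hq].
rewrite /mdot /mxtrace mulr_sumr; apply: ler_sum => i _.
set z := (row i Z12)^T.
have es : \sum_(j < k) Z12 i j * Z12 i j = (row i Z12 *m z) 0 0.
  by rewrite mxE; apply: eq_bigr => j _; rewrite !mxE.
have eq2 : (z^T *m (mu%:M - Z22) *m z) 0 0 = mu * (row i Z12 *m z) 0 0 - qf Z22 z.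
  by rewrite mulmxBr mulmxBl mul_mx_scalar -scalemxAl /qf /z trmxK !mxE.
have h1 := hq z; rewrite eq2 in h1.
have h2 := hp (mu *: col_mx (delta_mx i 0 : 'cV_r) 0 - col_mx 0 z).
rewrite -/(qf _ _) qf_expand // qf_u qf_w bl_uw in h2.
rewrite es. nra.
Qed.

Lemma mdot_1 n (X : 'M[R]_n) : mdot X 1%:M = \tr X.
Proof.
rewrite /mdot /mxtrace; apply: eq_bigr => i _.
rewrite (bigD1 i) //= big1 ?addr0; first by rewrite !mxE eqxx mulr1.
by move=> j hj; rewrite !mxE eq_sym (negbTE hj) mulr0.
Qed.

Lemma scal0 n : (0 : R)%:M = 0 :> 'M[R]_n.
Proof. by apply/matrixP => i j; rewrite !mxE mul0rn. Qed.

Lemma psd_shift n (X : 'M[R]_n) d : 0 <= d -> psd X -> psd (X + d%:M).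
Proof.
move=> hd [hs hp]; split; first by rewrite linearD /= hs tr_scalar_mx.
move=> x; rewrite mulmxDr mulmxDl mul_mx_scalar -scalemxAl mxE.
apply: addr_ge0 => //; rewrite mxE; apply: mulr_ge0 => //.
rewrite mxE; apply: sumr_ge0 => i _; by rewrite mxE -expr2 sqr_ge0.
Qed.

Lemma psd_diag n (X : 'M[R]_n) : psd X -> 0 <= \tr X.
Proof.
move=> [_ hp]; rewrite /mxtrace; apply: sumr_ge0 => i _.
have := hp (delta_mx i 0); by rewrite trmx_delta -rowE -colE !mxE.
Qed.

Lemma psd_dr r k (Z : 'M[R]_(r + k)) : psd Z -> psd (drsubmx Z).
Proof.
move=> [hs hp]; split; first by rewrite trmx_drsub hs.
move=> z; have := hp (col_mx 0 z); rewrite -{1}(submxK Z).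
by rewrite -/(qf _ _) qf_w.
Qed.
End S.
End H.
Import H.

Theorem lemma3 (R : realType) (r k m : nat) (hk : (0 < k)%N)
  (C : 'M[R]_(r + k)) (A : 'I_m -> 'M[R]_(r + k)) (b : 'I_m -> R)
  (hCsym : C^T = C) (hAsym : forall i, (A i)^T = A i)
  (hP : P_feasible A b) (hD : D_feasible C A) (hsd : sing_deg_one C A)
  (ha : forall y, psd (Lmap C A y) <->
          [/\ ursubmx (Lmap C A y) = 0, drsubmx (Lmap C A y) = 0
            & psd (ulsubmx (Lmap C A y))])
  (hb : exists y, [/\ ursubmx (Lmap C A y) = 0, drsubmx (Lmap C A y) = 0
            & pd (ulsubmx (Lmap C A y))])
  (hc : exists X22 : 'M[R]_k, [/\ pd X22,
          mdot C (block_mx 0 0 0 X22) = 0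
          & forall i, mdot (A i) (block_mx 0 0 0 X22) = 0])
  (M : R) (hM : 0 < M)
  (hMb : forall (t : R) (y : 'I_m -> R), 0 <= t ->
          psd (drsubmx (Lmap C A y) + t%:M) ->
          psd ((t * M)%:M - (drsubmx (Lmap C A y) + t%:M))) :
  forall t alpha : R, 0 < t -> 0 < alpha ->
    (vD C A b 0 t <= vD C A b (t * alpha) t)%E /\
    (vD C A b (t * alpha) t <=
       adde (u1 C A b M alpha t)
            (t ^+ 2 * alpha * (r + k)%:R + t * mdot C 1%:M)%:E)%E.
Proof.
Proof.
move=> t alpha ht hal.
have hs0 : 0 <= t * alpha by apply: mulr_ge0; apply: ltW.
split.
  apply: le_ereal_sup => _ [y hy <-]; exists y => //=.
  by move: hy; rewrite /= scal0 addr0 => hy; apply: psd_shift.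
apply: ge_ereal_sup => _ [y hy <-].
rewrite /= in hy.
set L := Lmap C A y in hy *.
set s := t * alpha in hy hs0 *.
have hobj : \sum_(i < m) (b i + t * mdot (A i) 1%:M) * y i
    = bdot b y + t * mdot C 1%:M - t * \tr L.
  have eL : \tr L = \tr C - \sum_(i < m) y i * \tr (A i).
    rewrite /L /Lmap /mxtrace.
    rewrite (eq_bigr (fun i => \sum_j y i * A i j j)); last by move=> i _; rewrite mulr_sumr.
    rewrite exchange_big -sumrB; apply: eq_bigr => j _; rewrite !mxE summxE.
    by congr (_ - _); apply: eq_bigr => i _; rewrite !mxE.
  under eq_bigr do rewrite mdot_1.
  rewrite mdot_1 eL.
  have -> : \sum_(i < m) (b i + t * \tr (A i)) * y i
     = bdot b y + t * \sum_(i < m) y i * \tr (A i).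
    by rewrite /bdot mulr_sumr -big_split /=; apply: eq_bigr => i _; ring.
  ring.
have hZ : L + s%:M = block_mx (ulsubmx L + s%:M) (ursubmx L) (dlsubmx L) (drsubmx L + s%:M).
  by rewrite -{1}(submxK L) (@scalar_mx_block _ r k s) add_block_mx !addr0.
have hdr : psd (drsubmx L + s%:M).
  by have := psd_dr hy; rewrite hZ block_mxKdr.
have hMM := hMb s y hs0 hdr.
have hy' := hy; rewrite hZ in hy'.
have hkey := key (mulr_gt0 (mulr_gt0 ht hal) hM) hy' hMM.
have htr1 : \tr (L + s%:M) = \tr L + s * (r + k)%:R.
  by rewrite mxtraceD mxtrace_scalar mulr_natr.
have htr2 : \tr (L + s%:M) = \tr (ulsubmx L + s%:M) + \tr (drsubmx L + s%:M).
  by rewrite hZ mxtrace_block.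
have hT2 := psd_diag hdr.
set P := mdot (ursubmx L) (ursubmx L) in hkey *.
set T1 := \tr (ulsubmx L + s%:M) in hkey htr2.
set T2 := \tr (drsubmx L + s%:M) in hT2 htr2.
have hPP : P / (M * alpha) <= t * T1.
  rewrite ler_pdivrMr; last by apply: mulr_gt0.
  have -> : t * T1 * (M * alpha) = s * M * T1 by rewrite /s; ring.
  exact: hkey.
have ht2 : 0 <= t * T2 by apply: mulr_ge0 => //; apply: ltW.
apply: (@le_trans _ _ ((bdot b y - P / (M * alpha))%:E +
      (t ^+ 2 * alpha * (r + k)%:R + t * mdot C 1%:M)%:E)%E).
  rewrite -EFinD lee_fin hobj.
  have e : t * \tr L = t * T1 + t * T2 - t ^+ 2 * alpha * (r + k)%:R.
    have : \tr L = T1 + T2 - s * (r + k)%:R by rewrite -htr2 htr1; ring.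
    by move=> ->; rewrite /s; ring.
  rewrite e; lra.
apply: leeD2r; apply: ereal_sup_ubound; exists y => //.
Qed.
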